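(* Let $p\ge 2$ and let $\mathbf{x}_1,\dots,\mathbf{x}_p\in\mathbb{R}^n$ be vectors such that each has mean zero, $\bar{x}_i=\frac1n\sum_{k=1}^n x_{ki}=0$, and unit Euclidean length, $\|\mathbf{x}_i\|=1$, for $i=1,\dots,p$. Suppose $$|\mathrm{corr}(\mathbf{x}_i,\mathbf{x}_1)|>\frac{\sqrt{2}}{2}\qquad\text{for } i=2,3,\dots,p.$$ Then, among the $2^p$ sets of size $p$ formed by choosing exactly one element from $\{\mathbf{x}_j,-\mathbf{x}_j\}$ for each $j=1,2,\dots,p$, there exists a set in which every pair of (distinct) vectors has a positive correlation.
   Context: Here $\mathrm{corr}(\mathbf{u},\mathbf{v})$ denotes the sample (Pearson) correlation coefficient of two vectors $\mathbf{u},\mathbf{v}\in\mathbb{R}^n$; for vectors with mean zero and unit length it equals the inner product $\mathbf{u}\cdot\mathbf{v}$. *)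

(* Defs.v *)
From mathcomp Require Import all_boot all_order all_algebra.
Set Implicit Arguments. Unset Strict Implicit. Unset Printing Implicit Defensive.
Import Order.TTheory GRing.Theory Num.Theory.
Local Open Scope ring_scope.

Definition mean (R : rcfType) (n : nat) (u : 'I_n -> R) : R :=
  (\sum_(k < n) u k) / n%:R.

Definition corr (R : rcfType) (n : nat) (u v : 'I_n -> R) : R :=
  (\sum_(k < n) (u k - mean u) * (v k - mean v)) /
  (Num.sqrt (\sum_(k < n) (u k - mean u) ^+ 2) *
   Num.sqrt (\sum_(k < n) (v k - mean v) ^+ 2)).

Definition enorm (R : rcfType) (n : nat) (u : 'I_n -> R) : R :=
  Num.sqrt (\sum_(k < n) u k ^+ 2).

Definition flip (R : rcfType) (n : nat) (b : bool) (u : 'I_n -> R) : 'I_n -> R :=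
  fun k => if b then - u k else u k.

(* Main.v *)
Require Import Defs.
From mathcomp Require Import all_boot all_order all_algebra.
From mathcomp Require Import ring lra.
Import Order.TTheory GRing.Theory Num.Theory.
Local Open Scope ring_scope.

Definition inner (R : rcfType) (n : nat) (u v : 'I_n -> R) : R :=
  \sum_(k < n) u k * v k.

Arguments inner {R n}.
Definition sgb (R : rcfType) (b : bool) : R := if b then -1 else 1.

Lemma flipE (R : rcfType) n b (u : 'I_n -> R) k : flip b u k = sgb R b * u k.
Proof. by rewrite /flip /sgb; case: b; rewrite ?mulN1r ?mul1r. Qed.
Arguments flipE {R n} b u k.

Lemma mean_flip (R : rcfType) n b (u : 'I_n -> R) : mean u = 0 -> mean (flip b u) = 0.
Proof.
move=> h; rewrite /mean.
under eq_bigr => k _ do rewrite flipE.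
by rewrite -mulr_sumr -mulrA; move: h; rewrite /mean => ->; rewrite mulr0.
Qed.
Arguments mean_flip {R n} b u.

Lemma sq_flip (R : rcfType) n b (u : 'I_n -> R) :
  \sum_(k < n) flip b u k ^+ 2 = \sum_(k < n) u k ^+ 2.
Proof. apply: eq_bigr => k _; rewrite flipE /sgb; case: b => //; ring. Qed.
Arguments sq_flip {R n} b u.

Lemma inner1 (R : rcfType) n (u : 'I_n -> R) : enorm u = 1 -> inner u u = 1.
Proof.
rewrite /enorm /inner => h.
have h0 : 0 <= \sum_(k < n) u k ^+ 2 by apply: sumr_ge0 => k _; exact: sqr_ge0.
transitivity (\sum_(k < n) u k ^+ 2).
  by apply: eq_bigr => k _; rewrite expr2.
by rewrite -(sqr_sqrtr h0) h expr1n.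
Qed.
Arguments inner1 {R n} u.

Lemma corrE (R : rcfType) n b c (u v : 'I_n -> R) :
  mean u = 0 -> mean v = 0 -> enorm u = 1 -> enorm v = 1 ->
  corr (flip b u) (flip c v) = sgb R b * sgb R c * inner u v.
Proof.
move=> mu mv nu nv; rewrite /corr !mean_flip //.
have e1 : forall d (w : 'I_n -> R), \sum_(k < n) (flip d w k - 0) ^+ 2 = \sum_(k < n) w k ^+ 2.
  by move=> d w; rewrite -(sq_flip d w); apply: eq_bigr => k _; rewrite subr0.
rewrite !e1; move: nu nv; rewrite /enorm => -> ->; rewrite mulr1 divr1 /inner mulr_sumr.
apply: eq_bigr => k _; rewrite !flipE; ring.
Qed.
Arguments corrE {R n} b c u v.

Lemma key (R : rcfType) n (u v w : 'I_n -> R) :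
  inner u u = 1 -> inner v v = 1 -> inner w w = 1 ->
  Num.sqrt 2 / 2 < inner u w -> Num.sqrt 2 / 2 < inner v w -> 0 < inner u v.
Proof.
move=> hu hv hw ha hb.
set a := inner u w in ha; set b := inner v w in hb; set d := a + b.
have h0 : 0 <= \sum_(k < n) (u k + v k - d * w k) ^+ 2.
  by apply: sumr_ge0 => k _; exact: sqr_ge0.
have E : \sum_(k < n) (u k + v k - d * w k) ^+ 2 =
  \sum_(k < n) (u k * u k + v k * v k + (d ^+ 2) * (w k * w k) + 2 * (u k * v k)
     + (- 2 * d) * (u k * w k) + (- 2 * d) * (v k * w k)).
  by apply: eq_bigr => k _; ring.
rewrite E !big_split /= -!mulr_sumr in h0.
rewrite -/(inner u u) -/(inner v v) -/(inner w w) -/(inner u v) -/(inner u w)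
  -/(inner v w) -/a -/b hu hv hw in h0.
have s2 : Num.sqrt (2 : R) ^+ 2 = 2 by rewrite sqr_sqrtr // ler0n.
have s0 : 0 <= Num.sqrt (2 : R) by exact: sqrtr_ge0.
have hd : Num.sqrt 2 < d by rewrite /d; lra.
have hd2 : 2 < d ^+ 2.
  rewrite -s2 ltr_pXn2r // ?nnegrE; lra.
rewrite /d in hd2 h0; nra.
Qed.
Arguments key {R n} u v w.

Theorem theorem1 (R : rcfType) (n p : nat) (hp : (2 <= p)%N)
  (x : 'I_p -> 'I_n -> R)
  (hmean : forall i : 'I_p, mean (x i) = 0)
  (hnorm : forall i : 'I_p, enorm (x i) = 1)
  (hcorr : forall i j : 'I_p, val j = 0%N -> i != j ->
     Num.sqrt 2 / 2 < `| corr (x i) (x j) |) :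
  exists s : 'I_p -> bool,
    forall i j : 'I_p, i != j -> 0 < corr (flip (s i) (x i)) (flip (s j) (x j)).
Proof.
have hp0 : (0 < p)%N by apply: leq_trans hp.
pose j0 : 'I_p := Ordinal hp0.
pose s i := inner (x i) (x j0) < 0.
pose y i := flip (s i) (x i).
have iy : forall i j, inner (y i) (y j) = sgb R (s i) * sgb R (s j) * inner (x i) (x j).
  move=> i j; rewrite /inner mulr_sumr; apply: eq_bigr => k _; rewrite /y !flipE; ring.
have cy : forall i j, corr (y i) (y j) = inner (y i) (y j).
  by move=> i j; rewrite iy /y corrE.
have cx : forall i j, corr (x i) (x j) = inner (x i) (x j).
  move=> i j; have := corrE false false (x i) (x j) (hmean i) (hmean j) (hnorm i) (hnorm j).
  by rewrite /sgb !mul1r /flip /=.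
have s0 : s j0 = false by rewrite /s inner1 // ltr10.
have yy : forall i, inner (y i) (y i) = 1.
  by move=> i; rewrite iy inner1 // /sgb; case: (s i); rewrite ?mulr1; ring.
have hc : forall i, i != j0 -> Num.sqrt 2 / 2 < inner (y i) (y j0).
  move=> k kj; have := hcorr k j0 erefl kj; rewrite cx iy s0 /sgb mulr1 /s.
  case: (ltrP (inner (x k) (x j0)) 0) => h.
    by rewrite ltr0_norm // mulN1r.
  by rewrite ger0_norm // mul1r.
have pos2 : 0 < Num.sqrt (2 : R) / 2 by rewrite divr_gt0 // sqrtr_gt0.
exists s => i j ij; rewrite -/(y i) -/(y j) cy.
have isym : forall u v : 'I_n -> R, inner u v = inner v u.
  by move=> u v; rewrite /inner; apply: eq_bigr => k _; rewrite mulrC.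
case: (eqVneq i j0) => [eij | ij0].
  have jj : j != j0 by rewrite -eij eq_sym.
  have := hc j jj; rewrite eij isym; lra.
case: (eqVneq j j0) => [-> | jj0].
  have := hc i ij0; lra.
apply: (key _ _ _ (yy i) (yy j) (yy j0)); exact: hc.
Qed.
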